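(* Let $\alpha>0$, $\eta=\alpha/(L+\alpha)$. Consider AggGCG (primal) with $y_0\in\mathrm{dom}\, h$, $s_0\in\mathbb{R}^n$: for $k\ge0$, $x_{k+1}=\mathrm{argmin}_x\{\langle s_k,x\rangle+h^\alpha(x)\}$, $y_{k+1}=(1-\eta)y_k+\eta x_{k+1}$, $s_{k+1}=(1-\eta)s_k+\eta\nabla f(y_k)$. Consider AggGCG (dual) with $z_0\in\mathrm{dom}\, f^*$, $v_0\in\mathbb{R}^n$: for $k\ge0$, $\bar z_{k+1}=\mathrm{argmin}_z\{-\langle v_k,z\rangle+f^*(z)\}$, $z_{k+1}=(1-\eta)z_k+\eta\bar z_{k+1}$, $v_{k+1}=(1-\eta)v_k+\eta\nabla(h^\alpha)^*(-z_k)$. If $s_0=z_0$ and $v_0=y_0$, then for every $k\ge0$: $y_k=v_k$, $s_k=z_k$, $x_{k+1}=\nabla(h^\alpha)^*(-z_k)$, and $\nabla f(y_k)=\bar z_{k+1}$.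
   Context: Let $\|\cdot\|$ be a norm on $\mathbb{R}^n$ with dual norm $\|\cdot\|_*$. Let $f:\mathbb{R}^n\to\mathbb{R}$ be convex, differentiable and $L$-smooth ($L>0$) with respect to $\|\cdot\|$, $h:\mathbb{R}^n\to(-\infty,\infty]$ closed proper convex with bounded domain, and $w:\mathbb{R}^n\to[0,+\infty]$ closed, $1$-strongly convex with respect to $\|\cdot\|$ on $\mathrm{dom}\, h$, with $\max_{\mathrm{dom}\, h}w<\infty$. Let $h^\alpha=h+\alpha w$; $^*$ denotes convex conjugate ($(h^\alpha)^*$ is differentiable, $f^*$ is $(1/L)$-strongly convex w.r.t. $\|\cdot\|_*$). *)

(* Defs.v *)
From HB Require Import structures.
From mathcomp Require Import all_boot all_order all_algebra.
From mathcomp Require Import all_classical all_reals all_analysis.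
Set Implicit Arguments. Unset Strict Implicit. Unset Printing Implicit Defensive.
Import Order.TTheory GRing.Theory Num.Theory.
Import numFieldNormedType.Exports.
Local Open Scope classical_set_scope.
Local Open Scope ring_scope.

Section Defs.
Context {R : realType} {n : nat}.
Notation vec := 'rV[R]_n.

Definition dot (x y : vec) : R := \sum_(i < n) x ord0 i * y ord0 i.

Definition is_norm (N : vec -> R) : Prop :=
  [/\ forall x, 0 <= N x,
      forall x, N x = 0 -> x = 0,
      forall (a : R) x, N (a *: x) = `|a| * N x
    & forall x y, N (x + y) <= N x + N y].

Definition dual_norm (N : vec -> R) (y : vec) : R :=
  sup [set dot y x | x in [set x | N x <= 1]].

Definition convex_fun (f : vec -> R) : Prop :=
  forall x y (t : R), 0 <= t <= 1 ->
    f (t *: x + (1 - t) *: y) <= t * f x + (1 - t) * f y.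

Definition is_gradient (f : vec -> R) (g : vec -> vec) : Prop :=
  forall x, differentiable f x /\ forall d, 'd f x d = dot (g x) d.

Definition L_smooth (N : vec -> R) (L : R) (g : vec -> vec) : Prop :=
  forall x y, dual_norm N (g x - g y) <= L * N (x - y).

Definition edom (h : vec -> \bar R) : set vec := [set x | (h x < +oo)%E].

Definition proper_fun (h : vec -> \bar R) : Prop :=
  (forall x, (-oo < h x)%E) /\ exists x, (h x < +oo)%E.

Definition econvex (h : vec -> \bar R) : Prop :=
  forall (x y : vec) (t : R), 0 <= t <= 1 ->
    (h (t *: x + (1 - t) *: y)%R <= t%:E * h x + (1 - t)%:E * h y)%E.

(* closed = lower semicontinuous = all sublevel sets closed *)
Definition eclosed (h : vec -> \bar R) : Prop :=
  forall a : R, closed [set x | (h x <= a%:E)%E].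

Definition bounded_dom (N : vec -> R) (h : vec -> \bar R) : Prop :=
  exists M : R, forall x, edom h x -> N x <= M.

Definition strongly_convex_on (N : vec -> R) (D : set vec) (w : vec -> \bar R) : Prop :=
  forall (x y : vec) (t : R), D x -> D y -> 0 <= t <= 1 ->
    (w (t *: x + (1 - t) *: y)%R + (t * (1 - t) / 2 * N (x - y)%R ^+ 2)%:E
       <= t%:E * w x + (1 - t)%:E * w y)%E.

Definition econj (h : vec -> \bar R) (y : vec) : \bar R :=
  ereal_sup [set ((dot y x)%:E - h x)%E | x in [set: vec]].

Definition is_argmin (F : vec -> \bar R) (x : vec) : Prop :=
  forall z, (F x <= F z)%E.

End Defs.

(* Main.v *)
Require Import Defs.
From HB Require Import structures.
From mathcomp Require Import all_boot all_order all_algebra.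
From mathcomp Require Import all_classical all_reals all_analysis.
From mathcomp Require Import ring lra.
Import Order.TTheory GRing.Theory Num.Theory.
Import numFieldNormedType.Exports.
Local Open Scope classical_set_scope.
Local Open Scope ring_scope.
Section Aux.
Context {R : realType} {n : nat}.
Local Notation vec := 'rV[R]_n.

Lemma normN0 (N : vec -> R) : is_norm N -> N 0 = 0.
Proof. case=> _ _ hZ _. by rewrite -(scale0r 0) hZ normr0 mul0r. Qed.

Lemma entry_le_norm (e : vec) i : `|e 0 i| <= `|e|.
Proof.
rewrite -[`|e|]/(mx_norm e) mx_normrE; apply/bigmax_geP; right => /=.
by exists (ord0, i).
Qed.

Lemma norm_upper (N : vec -> R) : is_norm N ->
  exists2 K, 0 < K & forall e, N e <= K * `|e|.
Proof.
move=> hN; have [N0 _ hZ hD] := hN.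
exists (1 + \sum_(i < n) N 'e_i).
  by rewrite ltr_pwDl ?ltr01 // sumr_ge0.
move=> e; rewrite {1}(row_sum_delta e).
apply: (le_trans (y := \sum_(i < n) `|e| * N 'e_i)).
  elim/big_ind2: _ => //.
  - by rewrite (normN0 N hN).
  - by move=> a b c d h1 h2; apply: le_trans (hD _ _) (lerD h1 h2).
  - by move=> i _; rewrite hZ ler_wpM2r // entry_le_norm.
by rewrite -mulr_sumr mulrC ler_wpM2r ?normr_ge0 // lerDr.
Qed.

Lemma normN_lip (N : vec -> R) : is_norm N ->
  exists2 K, 0 < K & forall x y, `|N x - N y| <= K * `|x - y|.
Proof.
move=> hN; have [K K0 hK] := norm_upper N hN; exists K => // x y.
have [N0 _ hZ hD] := hN.
have NN : forall u, N (- u) = N u by move=> u; rewrite -scaleN1r hZ normrN normr1 mul1r.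
have tri : forall a b, N a - N b <= K * `|a - b|.
  move=> a b; rewrite lerBlDr -{1}(subrK b a); apply: le_trans (hD _ _) _.
  by rewrite lerD2r hK.
rewrite ler_norml tri andbT lerNl opprB.
by rewrite -normrN opprB tri.
Qed.

Lemma normN_cont (N : vec -> R) : is_norm N -> continuous N.
Proof.
move=> hN; have [K K0 hK] := normN_lip N hN.
move=> x; apply/(@cvgrPdist_le _ _ _ (nbhs x) (nbhs_filter x)) => eps eps0.
have := (@cvgrPdist_le _ _ _ (nbhs x) (nbhs_filter x) (fun t : vec => t) x).1 cvg_id (eps / K) (divr_gt0 eps0 K0).
apply: filterS => t ht.
apply: le_trans (hK x t) _.
apply: le_trans (ler_wpM2l (ltW K0) ht) _.
by rewrite mulrCA divff ?mulr1 // gt_eqF.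
Qed.

Lemma norm_lower (N : vec -> R) : is_norm N ->
  exists2 c, 0 < c & forall e, c * `|e| <= N e.
Proof.
move=> hN; have [N0 Ndef hZ hD] := hN.
pose S := [set e : vec | `|e| = 1].
have unitS : forall e : vec, e != 0 -> S (`|e|^-1 *: e).
  move=> e e0; rewrite /S /= normrZ normfV normr_id mulVf //.
  by rewrite normr_eq0.
case: (pselect (S !=set0)) => [Sne|S0]; last first.
  exists 1 => // e; have [->|e0] := eqVneq e 0.
    by rewrite normr0 mulr0 N0.
  by exfalso; apply: S0; exists (`|e|^-1 *: e); apply: unitS.
have cS : compact S.
  apply: bounded_closed_compact.
    exists 1; split => // M M1 x /= Sx; rewrite /S /= in Sx.
    by rewrite Sx ltW.
  have -> : S = (fun e : vec => `|e|) @^-1` [set x : R | x = 1] by [].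
  apply: preimage_closed; last exact: closed_eq.
  by move=> x _; exact: norm_continuous.
have [c0 c0S minc] := EVT_min_rV Sne cS (continuous_subspaceT (normN_cont N hN)).
have c0n : c0 != 0.
  apply/eqP => c00; move: c0S; rewrite inE /S /= c00 normr0 => /esym/eqP.
  by rewrite oner_eq0.
exists (N c0).
  rewrite lt_def N0 andbT; apply/eqP => /Ndef /eqP; exact/negP.
move=> e; have [->|e0] := eqVneq e 0; first by rewrite normr0 mulr0 N0.
have := minc _ (mem_set (unitS e e0)).
rewrite hZ normfV normr_id => h.
have ep : 0 < `|e| by rewrite normr_gt0.
by rewrite -ler_pdivlMr // mulrC.
Qed.


Lemma dotC (a b : vec) : dot a b = dot b a.
Proof. by rewrite /dot; apply: eq_bigr => i _; rewrite mulrC. Qed.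

Lemma dotDr (a b c : vec) : dot a (b + c) = dot a b + dot a c.
Proof. by rewrite /dot -big_split; apply: eq_bigr => i _; rewrite mxE mulrDr. Qed.

Lemma dotZr (a b : vec) k : dot a (k *: b) = k * dot a b.
Proof. by rewrite /dot mulr_sumr; apply: eq_bigr => i _; rewrite mxE mulrCA. Qed.

Lemma dotNr (a b : vec) : dot a (- b) = - dot a b.
Proof. by rewrite -scaleN1r dotZr mulN1r. Qed.

Lemma dotBr (a b c : vec) : dot a (b - c) = dot a b - dot a c.
Proof. by rewrite dotDr dotNr. Qed.

Lemma dotDl (a b c : vec) : dot (b + c) a = dot b a + dot c a.
Proof. by rewrite dotC dotDr !(dotC a). Qed.

Lemma dotZl (a b : vec) k : dot (k *: b) a = k * dot b a.
Proof. by rewrite dotC dotZr dotC. Qed.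

Lemma dotNl (a b : vec) : dot (- b) a = - dot b a.
Proof. by rewrite dotC dotNr dotC. Qed.

Lemma dotBl (a b c : vec) : dot (b - c) a = dot b a - dot c a.
Proof. by rewrite dotDl dotNl. Qed.

Lemma dot_delta (a : vec) i : dot a 'e_i = a 0 i.
Proof.
rewrite /dot (bigD1 i) //= mxE eqxx /= mulr1 big1 ?addr0 // => j ji.
by rewrite mxE (negbTE ji) /= mulr0.
Qed.

Lemma dot_bound (N : vec -> R) : is_norm N ->
  forall a : vec, exists2 C, 0 <= C & forall e, dot a e <= C * N e.
Proof.
move=> hN a; have [c c0 hc] := norm_lower N hN.
exists ((\sum_(i < n) `|a 0 i|) / c).
  by rewrite divr_ge0 ?sumr_ge0 // ltW.
move=> e; apply: (le_trans (y := (\sum_(i < n) `|a 0 i|) * `|e|)).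
  rewrite /dot mulr_suml; apply: ler_sum => i _.
  apply: le_trans (ler_norm _) _; rewrite normrM ler_wpM2l //.
  exact: entry_le_norm.
rewrite -mulrA ler_wpM2l ?sumr_ge0 // ler_pdivlMl //.
Qed.

Lemma grad_unique (g : vec -> R) G p x : is_gradient g G ->
  (forall q, g p + dot x (q - p) <= g q) -> G p = x.
Proof.
move=> hG sub; apply/rowP => i.
pose d : vec := 'e_i.
pose c := dot x d.
pose l := fun t : R => g (t *: d + p).
have dl : forall t, derivable l t 1.
  move=> t; apply: diff_derivable; apply: differentiable_comp => //.
  exact: (hG _).1.
have Dl : 'D_1 l 0 = dot (G p) d.
  rewrite -(hG p).2 -deriveE; last exact: (hG p).1.
  rewrite /derive; set F1 := (fun h => _); set F2 := (fun h => _); suff -> : F1 = F2 by []; apply/funext => h; rewrite /F1 /F2 /=.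
  by rewrite /l addr0 scale0r add0r [_%:A]mulr1.
have H1 : is_derive (0:R) 1 l (dot (G p) d) by rewrite -Dl; apply: derivableP.
have H2 : is_derive (0:R) 1 (l - c *: id) (dot (G p) d - c *: 1) by apply: is_deriveB.
have H3 : is_derive (0:R) 1 (l - c *: id) 0.
  apply: (derive1_at_min (a := -1) (b := 1)).
  - by apply: (le_trans (lerN10 _)) ler01.
  - move=> t _; apply: derivableB; first exact: dl; apply: derivableZ; exact: derivable_id.
  - by rewrite in_itv /= ltrN10 ltr01.
  - move=> t _; change (g (0 *: d + p) - c * 0 <= g (t *: d + p) - c * t).
    rewrite scale0r add0r mulr0 subr0.
    have := sub (t *: d + p); rewrite addrK dotZr.
    by rewrite lerBrDr mulrC.
have := @derive_val _ _ _ _ _ _ _ H2; rewrite (@derive_val _ _ _ _ _ _ _ H3).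
rewrite /d dot_delta => /eqP; rewrite eq_sym subr_eq0 /c dot_delta.
by rewrite [_ *: 1]mulr1 => /eqP.
Qed.


Lemma conv_grad (f : vec -> R) gf : convex_fun f -> is_gradient f gf ->
  forall u v, f v + dot (gf v) (u - v) <= f u.
Proof.
move=> cf hg u v; set d := u - v.
rewrite addrC -lerBrDr -(hg v).2 -deriveE; last exact: (hg v).1.
have dv : derivable f v d by apply: diff_derivable; exact: (hg v).1.
rewrite /derive (cvg_at_rightE (fun h : R => h^-1 *: ((f \o shift v) (h *: d) - f v))) //.
apply: limr_le.
  rewrite -(cvg_at_rightE (fun h : R => h^-1 *: ((f \o shift v) (h *: d) - f v))) //.
  apply: cvg_trans dv; apply: cvg_app.
  move=> A [e egt0 Ae]; exists e => // x xe xgt0; apply: Ae => //.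
  exact/lt0r_neq0.
near=> h.
have h0 : 0 < h by near: h; exists 1 => //= x _ ->.
have h1 : h <= 1.
  near: h; exists 1 => //= x; rewrite /ball /= sub0r normrN => xl x0.
  by rewrite ltW // (le_lt_trans (ler_norm _) xl).
rewrite /= -[_ *: _]/(h^-1 * _) ler_pdivrMl // .
have -> : h *: d + v = h *: u + (1 - h) *: v.
  by rewrite /d scalerBr scalerBl scale1r -!addrA (addrC (- _)).
have := cf u v h; rewrite h1 ltW //= => /(_ isT) hc.
apply: le_trans (lerB hc (lexx _)) _.
by rewrite le_eqVlt; apply/orP; left; apply/eqP; ring.
Unshelve. all: by end_near.
Qed.


Lemma ha_cases (a b : \bar R) (al : R) : 0 < al -> (-oo < a)%E -> (0 <= b)%E ->
  (a + al%:E * b = +oo)%E \/ exists x y, a = x%:E /\ b = y%:E.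
Proof.
move=> a0; case: a => [x| |] //= _; case: b => [y| |] //= _.
- by right; exists x, y.
- by left; rewrite mulry gtr0_sg // mul1e.
- by left.
- by left; rewrite mulry gtr0_sg // mul1e.
Qed.

Lemma stepZ_lemma (f : vec -> R) gf (vk zb : vec) : convex_fun f -> is_gradient f gf ->
  is_argmin (fun u => ((- dot vk u)%:E + econj (fun u => (f u)%:E) u)%E) zb ->
  gf vk = zb.
Proof.
move=> cf hg hmin; apply: (@grad_unique f gf vk zb hg) => q.
have a : (econj (fun u => (f u)%:E) (gf vk) <= (dot (gf vk) vk - f vk)%:E)%E.
  apply/ereal_supP => _ [u _ <-]. rewrite -EFinB lee_fin.
  have := conv_grad f gf cf hg u vk; rewrite dotBr; lra.
have b := hmin (gf vk).
have c : ((dot zb q - f q)%:E <= econj (fun u => (f u)%:E) zb)%E.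
  by apply: ereal_sup_ubound; exists q.
have := le_trans (leeD (lexx _) c) (le_trans b (leeD (lexx _) a)).
rewrite -!EFinD lee_fin dotBr (dotC vk (gf vk)) (dotC vk zb); lra.
Qed.


Lemma stepX_lemma (N : vec -> R) (h w : vec -> \bar R) (al : R) G (sk X u0 : vec) :
  is_norm N -> proper_fun h -> econvex h -> (forall u, (0 <= w u)%E) ->
  strongly_convex_on N (edom h) w -> edom h u0 -> (w u0 < +oo)%E -> 0 < al ->
  is_gradient (fun u => fine (econj (fun u => (h u + al%:E * w u)%E) u)) G ->
  is_argmin (fun u => ((dot sk u)%:E + (h u + al%:E * w u))%E) X -> G (- sk) = X.
Proof.
move=> hN [hninf _] hconv w0 wsc hu0 wu0 a0 hG hmin.
set ha := fun u => (h u + al%:E * w u)%E.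
have finX : exists hX wX, h X = hX%:E /\ w X = wX%:E.
  have [hinf|//] := ha_cases _ _ _ a0 (hninf X) (w0 X).
  have [hinf0|[a [b [ha0 wb0]]]] := ha_cases _ _ _ a0 (hninf u0) (w0 u0).
    move: hinf0 hu0 wu0; rewrite /edom /=.
    by case: (h u0) => [a| |] //=; case: (w u0) (w0 u0) => [b| |] //=.
  have := hmin u0; rewrite /= hinf ha0 wb0 addey // -EFinM -!EFinD leye_eq.
have [hX [wX [hXe wXe]]] := finX.
set r := (hX + al * wX)%R.
have haX : ha X = r%:E by rewrite /ha hXe wXe /r -EFinM -EFinD.
pose c := econj ha.
have lo : forall q, ((dot q X - r)%:E <= c q)%E.
  by move=> q; apply: ereal_sup_ubound; exists X => //; rewrite haX -EFinB.
have up : (c (- sk)%R <= (dot (- sk)%R X - r)%:E)%E.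
  apply/ereal_supP => _ [u _ <-]; rewrite /ha.
  have [->|[hu [wu [hue wue]]]] := ha_cases _ _ _ a0 (hninf u) (w0 u); first by rewrite /= leNye.
  have := hmin u; rewrite /= hue wue hXe wXe -!EFinM -!EFinD lee_fin => hm.
  rewrite lee_fin !dotNl /r; lra.
have bnd : forall q, exists B, (c q <= B%:E)%E.
  move=> q; have [C C0 hC] := dot_bound N hN (q + sk).
  exists (dot q X - r + C ^+ 2 / al)%R.
  apply/ereal_supP => _ [u _ <-]; rewrite /ha.
  have [->|[hu [wu [hue wue]]]] := ha_cases _ _ _ a0 (hninf u) (w0 u); first by rewrite /= leNye.
  rewrite hue wue -EFinM -!EFinD lee_fin.
  pose m : vec := (2^-1 : R) *: u + (1 - 2^-1) *: X.
  have t01 : (0 <= (2^-1 : R) <= 1)%R.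
    by rewrite invr_ge0 ler0n /= invf_le1 ?ler1n // ltr0n.
  have hm := hconv u X _ t01; rewrite hue hXe -!EFinM -EFinD in hm.
  have edu : edom h u by rewrite /edom /= hue ltry.
  have edX : edom h X by rewrite /edom /= hXe ltry.
  have wm := wsc u X _ edu edX t01; rewrite wue wXe -!EFinM -EFinD in wm.
  have := hmin m; rewrite /= -/m hXe wXe.
  move: hm wm; rewrite -/m.
  case: (h m) (hninf m) => [hmv| |] //= _ hm.
  case: (w m) (w0 m) => [wmv| |] //= _ wm.
  rewrite lee_fin in hm; rewrite -EFinD lee_fin in wm.
  rewrite -!EFinM -!EFinD lee_fin => hmm.
  have dm : dot sk m = (2^-1 * dot sk u + (1 - 2^-1) * dot sk X)%R.
    by rewrite /m dotDr !dotZr.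
  have hCu := hC (u - X).
  rewrite dotDl !dotBr in hCu.
  set Nd := N (u - X) in wm hCu.
  have key : (C * Nd <= C ^+ 2 / al + al / 4%:R * Nd ^+ 2)%R.
    rewrite -subr_ge0.
    have -> : (C ^+ 2 / al + al / 4%:R * Nd ^+ 2 - C * Nd = (C - al * Nd / 2%:R) ^+ 2 / al)%R.
      by field; rewrite gt_eqF.
    by rewrite divr_ge0 ?sqr_ge0 // ltW.
  have awm : (al * (wmv + 2^-1 * (1 - 2^-1) / 2%:R * Nd ^+ 2) <= al * (2^-1 * wu + (1 - 2^-1) * wX))%R.
    by rewrite ler_wpM2l // ltW.
  rewrite dm in hmm.
  rewrite /r; nra.
apply: (@grad_unique _ G (- sk)%R X hG) => q.
have lq := lo q; have [B hB] := bnd q; have lp := lo (- sk)%R.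
have fp : fine (c (- sk)%R) = (dot (- sk)%R X - r)%R.
  move: up lp; case: (c (- sk)%R) => [t| |] //=; rewrite !lee_fin => a b.
  by apply/eqP; rewrite eq_le a b.
have fq : (dot q X - r <= fine (c q))%R.
  by move: lq hB; case: (c q) => [t| |] //=; rewrite lee_fin.
rewrite -/c fp dotBr !(dotC X) dotNl; lra.
Qed.

End Aux.

Theorem proposition4p1 (R : realType) (n : nat)
  (N : 'rV[R]_n -> R) (f : 'rV[R]_n -> R) (gradf : 'rV[R]_n -> 'rV[R]_n) (L : R)
  (h w : 'rV[R]_n -> \bar R) (alpha : R)
  (G : 'rV[R]_n -> 'rV[R]_n)
  (x y s zbar z v : nat -> 'rV[R]_n) :
  is_norm N ->
  convex_fun f -> is_gradient f gradf -> 0 < L -> L_smooth N L gradf ->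
  eclosed h -> proper_fun h -> econvex h -> bounded_dom N h ->
  (forall u, (0 <= w u)%E) -> eclosed w -> strongly_convex_on N (edom h) w ->
  (exists2 u0, edom h u0 & (w u0 < +oo)%E /\ forall u, edom h u -> (w u <= w u0)%E) ->
  0 < alpha ->
  let ha := fun u => (h u + alpha%:E * w u)%E in
  let eta := alpha / (L + alpha) in
  (* G is the gradient of the (real-valued) conjugate (h^alpha)^* *)
  is_gradient (fun u => fine (econj ha u)) G ->
  (* AggGCG (primal) *)
  edom h (y 0%N) ->
  (forall k, is_argmin (fun u => ((dot (s k) u)%:E + ha u)%E) (x k.+1)) ->
  (forall k, y k.+1 = (1 - eta) *: y k + eta *: x k.+1) ->
  (forall k, s k.+1 = (1 - eta) *: s k + eta *: gradf (y k)) ->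
  (* AggGCG (dual) *)
  edom (econj (fun u => (f u)%:E)) (z 0%N) ->
  (forall k, is_argmin (fun u => ((- dot (v k) u)%:E + econj (fun u => (f u)%:E) u)%E)
                       (zbar k.+1)) ->
  (forall k, z k.+1 = (1 - eta) *: z k + eta *: zbar k.+1) ->
  (forall k, v k.+1 = (1 - eta) *: v k + eta *: G (- z k)) ->
  s 0%N = z 0%N -> v 0%N = y 0%N ->
  forall k, [/\ y k = v k, s k = z k, x k.+1 = G (- z k) & gradf (y k) = zbar k.+1].
Proof.
move=> hN cf hgf L0 Lsm hcl hprop hconv hbd w0 wcl wsc [u0 hu0 [wu0 _]] a0 ha eta hG
  hy0 hx hy hs hz0 hzb hz hv s0 v0.
have sX : forall k, x k.+1 = G (- s k).
  move=> k; symmetry.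
  exact: (@stepX_lemma R n N h w alpha G (s k) (x k.+1) u0 hN hprop hconv w0 wsc hu0 wu0 a0 hG (hx k)).
have sZ : forall k, gradf (v k) = zbar k.+1.
  by move=> k; exact: (@stepZ_lemma R n f gradf (v k) (zbar k.+1) cf hgf (hzb k)).
have ind : forall k, y k = v k /\ s k = z k.
  elim=> [|k [IH1 IH2]]; first by split.
  split.
    by rewrite hy hv sX IH1 IH2.
  by rewrite hs hz IH1 IH2 sZ.
move=> k; have [e1 e2] := ind k.
by split => //; rewrite ?sX ?e2 // e1 sZ.
Qed.
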